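(* Let $\mathcal N$ be a network and $T\ge1$. A nonnegative vector $R\in[0,\infty)^{\mathcal L}$ belongs to $\mathcal R^{(\mathcal M_T,\mathcal E_T)}$ if and only if there exists $R'\in\mathrm{conv}\{R_C: C\in\mathrm{cycle}^*(\mathcal M_T,\mathcal E_T)\}$ with $R\preccurlyeq R'$.
   Context: A network is a triple $\mathcal N=(\mathcal L,\mathcal I,D_{\mathcal L})$ where $\mathcal L$ is a finite nonempty set of links, each $\mathcal I(l)$ is a collection of nonempty subsets of $\mathcal L$, and $D_{\mathcal L}$ assigns an integer $D_{\mathcal L}(l,l')$ to every pair with $l'\in\phi$ for some $\phi\in\mathcal I(l)$. A schedule is a map $S:\mathcal L\times\mathbb Z\to\{0,1\}$; $S(l,t)$ has a collision if there is $\phi\in\mathcal I(l)$ with $S(l',t+D_{\mathcal L}(l,l'))=1$ for all $l'\in\phi$; $S$ is collision free if no $(l,t)$ with $S(l,t)=1$ has a collision. $S[T,k]$ is the $|\mathcal L|\times T$ binary matrix with $S[T,k](l,j)=S(l,kT+j)$. The scheduling graph $(\mathcal M_T,\mathcal E_T)$ has vertex set $\mathcal M_T$ = all $|\mathcal L|\times T$ binary matrices $A$ with $A=S[T,0]$ for some collision-free $S$, and edge set $\mathcal E_T$ = all pairs $(A,B)$ with $A=S[T,0]$, $B=S[T,1]$ for some collision-free $S$. A cycle is a sequence $(A_0,\dots,A_k)$, $k\ge1$, with $(A_i,A_{i+1})\in\mathcal E_T$, $A_k=A_0$, and $A_0,\dots,A_{k-1}$ pairwise distinct; its rate vector is $R_C=\frac{1}{kT}\sum_{i=0}^{k-1}A_i\mathbf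 1$ ($\mathbf 1$ the all-ones vector of length $T$). $\mathcal R^{(\mathcal M_T,\mathcal E_T)}$ is the convex hull of the rate vectors of all cycles. For two sequences of matrices of the same length, $(A_0,\dots,A_k)\succcurlyeq(B_0,\dots,B_k)$ means $A_i\succcurlyeq B_i$ entrywise for all $i$. $\mathrm{cycle}^*(\mathcal M_T,\mathcal E_T)$ (the maximal cycles) is the set of cycles $C$ such that there is no cycle $C'\neq C$ of the same length with $C'\succcurlyeq C$. The relation $R\preccurlyeq R'$ on vectors is entrywise. *)

(* Defs.v *)
From HB Require Import structures.
From mathcomp Require Import all_boot all_order all_algebra.
Set Implicit Arguments. Unset Strict Implicit. Unset Printing Implicit Defensive.
Import Order.TTheory GRing.Theory Num.Theory.

Section Network.
(* A network (L, I, D): L a finite (nonempty) type of links, I l a collection of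
   (nonempty) subsets of L, D the integer delays (a total function; only values on
   the relevant pairs are ever used). *)
Variables (L : finType) (I : L -> {set {set L}}) (D : L -> L -> int).

Definition schedule := L -> int -> bool.

Definition has_collision (S : schedule) (l : L) (t : int) : Prop :=
  exists2 phi, phi \in I l & forall l', l' \in phi -> S l' (t + D l l')%R.

Definition collision_free (S : schedule) : Prop :=
  forall l t, S l t -> ~ has_collision S l t.

Variable T : nat.

Definition mat := {ffun L * 'I_T -> bool}.
Definition mat0 : mat := [ffun _ => false].

Definition window (S : schedule) (k : int) : mat :=
  [ffun p => S p.1 (k * (T%:Z) + (nat_of_ord p.2)%:Z)%R].

Definition in_M (A : mat) : Prop := exists S, collision_free S /\ A = window S 0.

Definition in_E (A B : mat) : Prop :=
  exists S, [/\ collision_free S, A = window S 0 & B = window S 1].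

(* A cycle (A_0, ..., A_k), k >= 1, represented as the list of its k+1 entries. *)
Definition is_cycle (c : seq mat) : Prop :=
  [/\ 2 <= size c,
      forall i, i.+1 < size c -> in_E (nth mat0 c i) (nth mat0 c i.+1),
      nth mat0 c (size c).-1 = nth mat0 c 0
    & uniq (take (size c).-1 c)].

Definition mat_ge (A B : mat) : Prop := forall p, B p <= A p.

Definition seq_ge (c c' : seq mat) : Prop :=
  size c = size c' /\ forall i, i < size c -> mat_ge (nth mat0 c i) (nth mat0 c' i).

Definition is_max_cycle (c : seq mat) : Prop :=
  is_cycle c /\
  ~ exists c', [/\ is_cycle c', c' <> c, size c' = size c & seq_ge c' c].

Variable R : realFieldType.
Local Open Scope ring_scope.

Definition rate (c : seq mat) : L -> R := fun l =>
  (\sum_(i < (size c).-1) \sum_(j < T) ((nth mat0 c i) (l, j) : nat)%:R)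
    / ((size c).-1 * T)%:R.

Definition conv (P : (L -> R) -> Prop) (x : L -> R) : Prop :=
  exists n (w : 'I_n -> R) (p : 'I_n -> L -> R),
    [/\ forall i, P (p i), forall i, 0 <= w i, \sum_(i < n) w i = 1
      & forall l, x l = \sum_(i < n) w i * p i l].

Definition cycle_rates (v : L -> R) : Prop := exists2 c, is_cycle c & v = rate c.
Definition max_cycle_rates (v : L -> R) : Prop := exists2 c, is_max_cycle c & v = rate c.

End Network.

(* Main.v *)
Require Import Defs.
From mathcomp Require Import all_boot all_order all_algebra.
From Stdlib Require Import Classical FunctionalExtensionality.
From Stdlib Require List.
From mathcomp Require Import ring zify.
Import Order.TTheory GRing.Theory Num.Theory.
Local Open Scope ring_scope.

Set Implicit Arguments. Unset Strict Implicit.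
Section Proofs.
Variables (L : finType) (I : L -> {set {set L}}) (D : L -> L -> int) (T : nat).

Local Notation mat := (mat L T).
Local Notation mat0 := (mat0 L T).
Local Notation in_E := (in_E I D (T:=T)).

Fixpoint pathE (x : mat) (s : seq mat) : Prop :=
  match s with [::] => True | y :: s' => in_E x y /\ pathE y s' end.

Lemma pathE_cat x s1 s2 : pathE x (s1 ++ s2) <-> pathE x s1 /\ pathE (last x s1) s2.
Proof.
elim: s1 x => [|y s1 IH] x /=; first by tauto.
rewrite IH; tauto.
Qed.

Lemma pathE_rcons x s y : pathE x (rcons s y) <-> pathE x s /\ in_E (last x s) y.
Proof. rewrite -cats1 pathE_cat /=; tauto. Qed.

Lemma pathE_nth x t :
  pathE x t <-> (forall i, (i.+1 < size (x :: t))%N -> in_E (nth mat0 (x :: t) i) (nth mat0 (x :: t) i.+1)).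
Proof.
elim: t x => [|y t IH] x /=.
  by split => // _ [|i].
rewrite IH; split.
  by move=> [Hxy H] [|i] //= Hi; apply: H.
by move=> H; split; [apply: (H 0%N) | move=> i Hi; apply: (H i.+1)].
Qed.

Definition closedE (w : seq mat) : Prop :=
  match w with [::] => False | x :: s => pathE x (rcons s x) end.

Lemma closedE_rot1 w : closedE w -> closedE (rot 1 w).
Proof.
case: w => [|x [|y s]] //; rewrite rot1_cons /=. idtac.

move=> [Hxy]; rewrite !pathE_rcons /= => -[Hs Hl]; split => //.
by rewrite last_rcons.
Qed.

Lemma closedE_rot n w : (n <= size w)%N -> closedE w -> closedE (rot n w).
Proof.
elim: n => [|n IH] Hn Hw; first by rewrite rot0.
have -> : rot n.+1 w = rot 1 (rot n w).
  by rewrite -addn1 addnC rotD // add1n.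
apply: closedE_rot1; apply: IH => //; exact: ltnW.
Qed.

Lemma repr_cycle x s : closedE (x :: s) -> uniq (x :: s) -> is_cycle I D (x :: rcons s x).
Proof.
move=> /= Hp Hu; split.
- by rewrite /= size_rcons.
- by move/pathE_nth: Hp.
- by rewrite /= size_rcons /= nth_rcons ltnn eqxx.
- by rewrite /= size_rcons /= -cats1 take_size_cat.
Qed.

Lemma cycle_repr c : is_cycle I D c ->
  exists x s, [/\ c = x :: rcons s x, closedE (x :: s) & uniq (x :: s)].
Proof.
case=> Hs He Hl Hu.
case: c Hs He Hl Hu => [|x c] //; case/lastP: c => [|s y] // _ He Hl Hu.
rewrite /= size_rcons /= nth_rcons ltnn eqxx in Hl; subst y.
exists x, s; split => //.
- by apply/pathE_nth.
- by move: Hu; rewrite /= size_rcons /= -cats1 take_size_cat.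
Qed.

Lemma not_uniq_split (w : seq mat) : ~~ uniq w -> exists p a q r, w = p ++ a :: q ++ a :: r.
Proof.
elim: w => [|x s IH] //=; rewrite negb_and negbK => /orP[/splitPr [q r] | /IH [p [a [q [r ->]]]]].
  by exists [::], x, q, r.
by exists (x :: p), a, q, r.
Qed.

Variable R : realFieldType.
Hypothesis HT : (0 < T)%N.

Definition g (A : mat) (l : L) : R := \sum_(j < T) ((A (l, j)) : nat)%:R.
Definition wr (w : seq mat) (l : L) : R := (\sum_(A <- w) g A l) / ((size w * T)%:R).

Lemma rate_cycle x s : rate R (x :: rcons s x) = wr (x :: s).
Proof.
apply: functional_extensionality => l.
rewrite /rate /wr -rcons_cons size_rcons /=; congr (_ / _).
rewrite (big_nth mat0) big_mkord; apply: eq_bigr => i _.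
by rewrite -rcons_cons nth_rcons ltn_ord.
Qed.

Definition convS (P : (L -> R) -> Prop) (x : L -> R) : Prop :=
  exists s : seq ((L -> R) * R),
    [/\ (forall q, List.In q s -> P q.1 /\ 0 <= q.2), \sum_(q <- s) q.2 = 1
      & forall l, x l = \sum_(q <- s) q.2 * q.1 l].

Lemma convS_ext P x y : convS P x -> (forall l, x l = y l) -> convS P y.
Proof. by move=> [s [H1 H2 H3]] E; exists s; split => // l; rewrite -E. Qed.

Lemma convS_comb P s : (forall q, List.In q s -> convS P q.1 /\ 0 <= q.2) ->
  exists t, [/\ (forall q, List.In q t -> P q.1 /\ 0 <= q.2),
     \sum_(q <- t) q.2 = \sum_(q <- s) q.2 &
     forall l, \sum_(q <- t) q.2 * q.1 l = \sum_(q <- s) q.2 * q.1 l].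
Proof.
elim: s => [|[z v] s IH] H.
  by exists [::]; split.
have [t [Ht1 Ht2 Ht3]] := IH (fun q Hq => H q (or_intror Hq)).
have [[u [Hu1 Hu2 Hu3]] Hv] := H _ (or_introl erefl).
exists ([seq (q.1, v * q.2) | q <- u] ++ t); split.
- move=> q /List.in_app_iff [/List.in_map_iff [q' [<- Hq']] | /Ht1 //].
  have [? ?] := Hu1 _ Hq'; split => //=; exact: mulr_ge0.
- by rewrite big_cat big_map /= -mulr_sumr Hu2 mulr1 Ht2 big_cons.
- move=> l; rewrite big_cat big_map /= Ht3 big_cons /=; congr (_ + _).
  simpl in Hu3; by rewrite Hu3 mulr_sumr; apply: eq_bigr => q _; rewrite mulrA.
Qed.

Lemma convS_bin P a b (lam : R) : convS P a -> convS P b -> 0 <= lam <= 1 ->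
  convS P (fun l => lam * a l + (1 - lam) * b l).
Proof.
move=> Ha Hb /andP[H0 H1].
have Hc : forall q, List.In q [:: (a, lam); (b, 1 - lam)] -> convS P q.1 /\ 0 <= q.2.
  by move=> q /= [<-|[<-|[]]]; split => //=; rewrite subr_ge0.
have [t [Ht1 Ht2 Ht3]] := @convS_comb P _ Hc.
exists t; split => //.
- by rewrite Ht2 !big_cons big_nil /= addr0 addrC subrK.
- by move=> l; rewrite Ht3 !big_cons big_nil /= addr0.
Qed.

Lemma wr_cat w1 w2 : w1 != [::] -> w2 != [::] ->
  forall l, wr (w1 ++ w2) l =
    (size w1)%:R / (size (w1 ++ w2))%:R * wr w1 l +
    (1 - (size w1)%:R / (size (w1 ++ w2))%:R) * wr w2 l.
Proof.
move=> H1 H2 l; rewrite /wr big_cat /= size_cat.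
have k1 : (size w1)%:R != 0 :> R by rewrite pnatr_eq0 size_eq0.
have k2 : (size w2)%:R != 0 :> R by rewrite pnatr_eq0 size_eq0.
have kT : T%:R != 0 :> R by rewrite pnatr_eq0 -lt0n.
have k12 : (size w1)%:R + (size w2)%:R != 0 :> R.
  by rewrite -natrD pnatr_eq0 addn_eq0 negb_and !size_eq0 H1.
rewrite !natrM !natrD; field.
by rewrite k1 k2 kT k12.
Qed.

Local Notation CR := (cycle_rates I D T (R:=R)).

Lemma wr_rot n w : wr (rot n w) = wr w.
Proof.
apply: functional_extensionality => l.
by rewrite /wr size_rot (perm_big w) // perm_rot.
Qed.

Lemma walk_conv w : closedE w -> convS CR (wr w).
Proof.
move: {2}(size w) (leqnn (size w)) => n; elim: n w => [|n IH] w Hn Hw.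
  by case: w Hn Hw.
case Hu: (uniq w).
  case: w Hw Hu {Hn} => [|x s] // Hw Hu.
  exists [:: (wr (x :: s), 1)]; split.
  - move=> q /= [<-|[]]; split => //=.
    by exists (x :: rcons s x); [exact: repr_cycle | rewrite rate_cycle].
  - by rewrite big_cons big_nil addr0.
  - by move=> l; rewrite big_cons big_nil addr0 mul1r.
have [p [a [q [r Ew]]]] := @not_uniq_split w (negbT Hu).
have Ew' : rot (size p) w = (a :: q) ++ (a :: (r ++ p)).
  by rewrite Ew rot_size_cat /= -catA.
have Hw' : closedE (rot (size p) w).
  by apply: closedE_rot => //; rewrite Ew size_cat leq_addr.
rewrite -(wr_rot (size p)) Ew'.
rewrite Ew' /= rcons_cat /= pathE_cat /= in Hw'.
case: Hw' => [H1 [H2 H3]].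
have S1 : (size (a :: q) <= n)%N.
  by move: Hn; rewrite Ew !size_cat /= size_cat /=; lia.
have S2 : (size (a :: (r ++ p)) <= n)%N.
  by move: Hn; rewrite Ew !size_cat /= size_cat /= size_cat; lia.
have C1 := IH _ S1 (proj2 (pathE_rcons _ _ _) (conj H1 H2)).
have C2 := IH _ S2 H3.
have -> : wr ((a :: q) ++ a :: (r ++ p)) = fun l =>
    (size (a :: q))%:R / (size ((a :: q) ++ a :: (r ++ p)))%:R * wr (a :: q) l +
    (1 - (size (a :: q))%:R / (size ((a :: q) ++ a :: (r ++ p)))%:R) * wr (a :: r ++ p) l.
  by apply: functional_extensionality => l; rewrite wr_cat.
apply: convS_bin => //.
rewrite divr_ge0 ?ler0n //= ler_pdivrMr ?mul1r ?ler_nat ?size_cat ?leq_addr //.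
Qed.

Definition zrow (l0 : L) (A : mat) : mat := [ffun p => (p.1 != l0) && A p].

Lemma in_E_zrow l0 A B : in_E A B -> in_E (zrow l0 A) (zrow l0 B).
Proof.
move=> [S [HS -> ->]].
exists (fun l t => (l != l0) && S l t); split.
- move=> l t /andP[_ Hs] [phi Hphi Hall]; apply: (HS l t Hs).
  by exists phi => // l' /Hall /andP[].
- by apply/ffunP => p; rewrite !ffunE.
- by apply/ffunP => p; rewrite !ffunE.
Qed.

Lemma pathE_zrow l0 x s : pathE x s -> pathE (zrow l0 x) (map (zrow l0) s).
Proof.
elim: s x => [|y s IH] x //= [H1 H2]; split; [exact: in_E_zrow | exact: IH].
Qed.

Lemma closedE_zrow l0 w : closedE w -> closedE (map (zrow l0) w).
Proof. by case: w => [|x s] //= H; rewrite -map_rcons; apply: pathE_zrow. Qed.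

Lemma wr_zrow l0 w l : wr (map (zrow l0) w) l = if l == l0 then 0 else wr w l.
Proof.
rewrite /wr big_map size_map; case: eqP => [->|/eqP ne].
  rewrite big1 ?mul0r // => A _; rewrite /g big1 // => j _.
  by rewrite ffunE /= eqxx.
congr (_ / _); apply: eq_bigr => A _; rewrite /g; apply: eq_bigr => j _.
by rewrite ffunE /= ne.
Qed.

Lemma cyc_zero l0 r : CR r -> convS CR (fun l => if l == l0 then 0 else r l).
Proof.
move=> [c Hc ->].
have [x [s [-> Hcl Hu]]] := @cycle_repr c Hc.
rewrite rate_cycle.
apply: (convS_ext (walk_conv (closedE_zrow l0 Hcl))) => l.
by rewrite wr_zrow.
Qed.

Lemma down1 l0 y t : convS CR y -> 0 <= t <= y l0 ->
  convS CR (fun l => if l == l0 then t else y l).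
Proof.
move=> [s [Hs1 Hs2 Hs3]] /andP[Ht0 Ht1].
have Hc : forall q, List.In q [seq ((fun l => if l == l0 then 0 else q.1 l), q.2) | q <- s] ->
   convS CR q.1 /\ 0 <= q.2.
  move=> q /List.in_map_iff [q' [<- Hq']]; have [? ?] := Hs1 _ Hq'.
  by split => //=; apply: cyc_zero.
have [u [Hu1 Hu2 Hu3]] := @convS_comb CR _ Hc.
have Hz : convS CR (fun l => if l == l0 then 0 else y l).
  exists u; split => //.
    by rewrite Hu2 big_map.
  move=> l; rewrite Hu3 big_map /=; case: eqP => _.
    by rewrite big1 // => q _; rewrite mulr0.
  by rewrite Hs3.
have [y0|y0] := eqVneq (y l0) 0.
  have t0 : t = 0 by apply/le_anti; rewrite Ht0 -y0 Ht1.
  apply: (convS_ext Hz) => l; rewrite t0; case: eqP => // ->; by rewrite y0.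
have ypos : 0 < y l0 by rewrite lt_def y0 (le_trans Ht0 Ht1).
have Hy : convS CR y by exists s.
have Hl : 0 <= t / y l0 <= 1.
  by rewrite divr_ge0 ?(ltW ypos) //= ler_pdivrMr // mul1r.
apply: (convS_ext (convS_bin Hy Hz Hl)) => l.
case: eqP => [->|_].
  by rewrite mulr0 addr0 divfK.
by rewrite -mulrDl addrC subrK mul1r.
Qed.

Lemma downU (U : seq L) y x : convS CR y -> (forall l, 0 <= x l <= y l) ->
  (forall l, l \notin U -> x l = y l) -> convS CR x.
Proof.
elim: U y => [|l0 U IH] y Hy Hxy HU.
  by apply: (convS_ext Hy) => l; rewrite HU.
have Hy' := down1 (t := x l0) Hy (Hxy l0).
apply: (IH _ Hy').
  move=> l; case: eqP => [->|_] //; by rewrite lexx (andP (Hxy l0)).1.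
move=> l Hl; case: eqP => [->|/eqP ne] //; apply: HU.
by rewrite in_cons negb_or ne.
Qed.

Definition ones (c : seq mat) : nat :=
  (\sum_(i < size c) \sum_(p : L * 'I_T) (nth mat0 c i p : nat))%N.

Lemma sum_lt (J : finType) (F G : J -> nat) j0 :
  (forall j, F j <= G j)%N -> (F j0 < G j0)%N -> (\sum_j F j < \sum_j G j)%N.
Proof.
move=> H H0; rewrite (bigD1 j0) //= [X in (_ < X)%N](bigD1 j0) //=.
by rewrite -addSn leq_add // leq_sum.
Qed.

Lemma ones_bound c : (ones c <= size c * #|{: L * 'I_T}|)%N.
Proof.
apply: (@leq_trans (\sum_(i < size c) \sum_(p : L * 'I_T) 1)%N).
  by apply: leq_sum => i _; apply: leq_sum => p _; apply: leq_b1.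
under eq_bigr do rewrite sum1_card.
by rewrite big_const_ord iter_addn_0 mulnC.
Qed.

Lemma ones_lt c c' : seq_ge c' c -> c' <> c -> (ones c < ones c')%N.
Proof.
move=> [Hs Hge] Hne.
have [i [p [Hi Hp]]] : exists i p, (i < size c')%N /\ nth mat0 c i p <> nth mat0 c' i p.
  apply: NNPP => Hn; apply: Hne; apply: (@eq_from_nth _ mat0) => // i Hi.
  apply/ffunP => p; apply: NNPP => Hp; apply: Hn; exists i, p; split => //.
  by move=> E; apply: Hp.
have Hi' : (i < size c)%N by rewrite -Hs.
rewrite /ones Hs.
apply: (@sum_lt _ _ _ (Ordinal Hi')) => [j|/=].
  by apply: leq_sum => q _; apply: (Hge j); rewrite Hs.
apply: (@sum_lt _ _ _ p) => [q|]; first exact: (Hge i Hi).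
have := Hge i Hi p; move: Hp; case: (nth mat0 c i p); case: (nth mat0 c' i p) => //.
Qed.

Lemma seq_ge_refl (c : seq mat) : seq_ge c c.
Proof. by split => // i _ p. Qed.

Lemma seq_ge_trans (a b c : seq mat) : seq_ge a b -> seq_ge b c -> seq_ge a c.
Proof.
move=> [s1 H1] [s2 H2]; split; first by rewrite s1.
by move=> i Hi p; apply: leq_trans (H2 i _ p) (H1 i Hi p); rewrite -s1.
Qed.

Lemma exists_max (c : seq mat) : is_cycle I D c -> exists c', is_max_cycle I D c' /\ seq_ge c' c.
Proof.
move=> Hc.
suff H : forall n (c : seq mat), is_cycle I D c ->
   (size c * #|{: L * 'I_T}| - ones c <= n)%N ->
   exists c', is_max_cycle I D c' /\ seq_ge c' c.
  exact: (H _ c Hc (leqnn _)).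
elim => [|n IH] {}c {}Hc Hn;
  (case: (classic (is_max_cycle I D c)) => Hm;
    [by exists c; split => //; apply: seq_ge_refl|]);
  (have [c'' [Hc'' Hne Hs Hge]] : exists c' : seq mat, [/\ is_cycle I D c', c' <> c, size c' = size c & seq_ge c' c]
     by apply: NNPP => Hn'; apply: Hm; split);
  have Hlt := ones_lt Hge Hne; have Hb := ones_bound c''; rewrite Hs in Hb.
  by lia.
have [c' [Hm' Hge']] := IH c'' Hc'' ltac:(rewrite Hs; lia).
by exists c'; split => //; apply: seq_ge_trans Hge' Hge.
Qed.

Lemma rate_mono (c c' : seq mat) : seq_ge c' c -> forall l, rate R c l <= rate R c' l.
Proof.
move=> [Hs H] l; rewrite /rate Hs; apply: ler_wpM2r.
  by rewrite invr_ge0 ler0n.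
apply: ler_sum => i _; apply: ler_sum => j _; rewrite ler_nat.
by apply: H; rewrite Hs (leq_trans (ltn_ord i)) // leq_pred.
Qed.

End Proofs.

Lemma In_nth (A : Type) (d : A) (s : seq A) i : (i < size s)%N -> List.In (nth d s i) s.
Proof. elim: s i => [|x s IH] [|i] //= Hi; [by left | right; exact: IH]. Qed.


Unset Implicit Arguments.
Theorem theorem9 (L : finType) (I : L -> {set {set L}}) (D : L -> L -> int)
  (HL : (0 < #|L|)%N) (HI : forall l phi, phi \in I l -> phi != set0)
  (T : nat) (HT : (1 <= T)%N) (R : realFieldType) (x : L -> R)
  (Hx : forall l, 0 <= x l) :
  conv (cycle_rates I D T (R:=R)) x <->
  exists x' : L -> R, conv (max_cycle_rates I D T (R:=R)) x' /\ forall l, x l <= x' l.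
Proof.
split.
- move=> [n [w [p [Hp Hw Hs Hxe]]]].
  have : forall i : 'I_n, exists c' : seq (mat L T), is_max_cycle I D c' /\ forall l, p i l <= rate R c' l.
    move=> i; have [c Hc ->] := Hp i; have [c' [Hm Hge]] := exists_max HT Hc.
    by exists c'; split => // l; apply: rate_mono.
  case/fin_all_exists => f Hf.
  exists (fun l => \sum_(i < n) w i * rate R (f i) l); split.
    exists n, w, (fun i => rate R (f i)); split => // i.
    by exists (f i); [apply: (Hf i).1|].
  move=> l; rewrite Hxe; apply: ler_sum => i _; apply: ler_wpM2l => //.
  exact: (Hf i).2.
- move=> [x' [[n [w [p [Hp Hw Hs Hx']]]] Hle]].
  have Hy : convS (cycle_rates I D T (R:=R)) x'.
    exists [seq (p i, w i) | i <- index_enum 'I_n]; split.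
    + move=> q /List.in_map_iff [i [<- _]]; split => //=.
      by have [c [Hc _] ->] := Hp i; exists c.
    + by rewrite big_map.
    + by move=> l; rewrite big_map Hx'.
  have [s [H1 H2 H3]] : convS (cycle_rates I D T (R:=R)) x.
    apply: (downU HT (U := enum L) Hy).
      by move=> l; rewrite Hx Hle.
    by move=> l; rewrite mem_enum.
  pose d := ((fun _ : L => 0 : R), 0 : R).
  exists (size s), (fun i => (nth d s i).2), (fun i => (nth d s i).1); split.
  + by move=> i; apply: (H1 _ (In_nth d (ltn_ord i))).1.
  + by move=> i; apply: (H1 _ (In_nth d (ltn_ord i))).2.
  + by rewrite -H2 (big_nth d) big_mkord.
  + by move=> l; rewrite H3 (big_nth d) big_mkord.
Qed.
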